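(* Let $X$ be a connected open Riemann surface and let $E\subseteq X$ be a semi-admissible set. Then $E$ satisfies condition $\mathcal{G}$: for every compact set $K\subseteq X$ there exists a compact set $Q$ with $K\subseteq Q\subseteq X$ such that no connected component of the interior $\mathring{E}$ of $E$ intersects both $K$ and $X\setminus Q$.
   Context: A closed set $E \subseteq X$ is called semi-admissible if there exist a locally finite, pairwise disjoint family of compact sets $\{H_\lambda\}_{\lambda\in\Lambda}$ in $X$ and a closed set $S\subseteq X$ with empty interior such that $E = S \cup \bigcup_{\lambda\in\Lambda} H_\lambda$. *)

(* Defs.v *)
From HB Require Import structures.
From mathcomp Require Import all_boot all_order all_algebra.
From mathcomp Require Import complex.
From mathcomp Require Import all_classical all_reals all_analysis.
Import numFieldNormedType.Exports.

Set Implicit Arguments.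
Unset Strict Implicit.
Unset Printing Implicit Defensive.

Local Open Scope classical_set_scope.
Local Open Scope ring_scope.

Definition CC (R : realType) : numClosedFieldType := R[i].

Section RiemannSurface.
Variables (R : realType) (X : topologicalType).

Definition is_chart (U : set X) (phi : X -> CC R) (psi : CC R -> X) : Prop :=
  [/\ open U, open (phi @` U), {within U, continuous phi},
      {within phi @` U, continuous psi}
    & (forall x, U x -> psi (phi x) = x)].

Definition holomorphic_atlas : Prop :=
  exists (I : Type) (U : I -> set X) (phi : I -> X -> CC R) (psi : I -> CC R -> X),
    [/\ forall i, is_chart (U i) (phi i) (psi i),
        forall x, exists i, U i x
      & forall i j z, (phi i @` (U i `&` U j)) z ->
          derivable (phi j \o psi i) z (1 : CC R)].

Definition riemann_surface : Prop :=
  [/\ hausdorff_space X, connected [set: X] & holomorphic_atlas].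

Definition open_riemann_surface : Prop :=
  riemann_surface /\ ~ compact [set: X].

End RiemannSurface.

Section SemiAdmissible.
Variable (X : topologicalType).

Definition locally_finite_family (I : Type) (H : I -> set X) : Prop :=
  forall x : X, exists N : set X, nbhs x N /\ finite_set [set i | H i `&` N !=set0].

Definition semi_admissible (E : set X) : Prop :=
  closed E /\
  exists (I : Type) (H : I -> set X) (S : set X),
    [/\ (forall i, compact (H i)),
        locally_finite_family H,
        (forall i j, i <> j -> H i `&` H j = set0),
        closed S /\ interior S = set0
      & E = S `|` \bigcup_(i in [set: I]) H i].

Definition condition_G (E : set X) : Prop :=
  forall K : set X, compact K ->
    exists Q : set X, [/\ compact Q, K `<=` Q &
      forall x, interior E x ->
        ~ ((connected_component (interior E) x `&` K !=set0) /\
           (connected_component (interior E) x `&` ~` Q !=set0))].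

End SemiAdmissible.

(* Main.v *)
Require Import Defs.
From HB Require Import structures.
From HB Require Import structures.
From mathcomp Require Import all_boot all_order all_algebra.
From mathcomp Require Import all_classical all_reals all_analysis.
From mathcomp Require Import finmap.
Import numFieldNormedType.Exports.
Local Open Scope classical_set_scope.

Lemma lf_closed (X : topologicalType) (I : Type) (H : I -> set X) (P : set I) :
  locally_finite_family H -> (forall i, closed (H i)) ->
  closed (\bigcup_(i in P) H i).
Proof.

move=> lf cH x clx.
have [N [Nx finJ]] := lf x.
pose U := \bigcup_(i in P `&` [set i | H i `&` N !=set0]) H i.
have cU : closed U.
  apply: (@closed_bigcup _ {classic I}) => //; exact: finite_setIr.
have [Ux|nUx] := pselect (U x).
  by case: Ux => i [Pi _] Hix; exists i.
have : nbhs x (N `&` ~` U).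
  apply: filterI => //; apply: open_nbhs_nbhs; split => //.
  exact: closed_openC.
move=> /clx [y [[i Pi Hiy] [Ny nUy]]].
exfalso; apply: nUy; exists i => //; split => //; exists y.
by [].
Qed.

Lemma finite_compact_union (X : topologicalType) (I : Type) (H : I -> set X) (J : set I) :
  finite_set J -> (forall i, compact (H i)) -> compact (\bigcup_(i in J) H i).
Proof.

move=> fJ cH.
rewrite -(@bigsetU_fset_set _ {classic I}) //.
exact: bigsetU_compact.
Qed.

Lemma lf_compact (X : topologicalType) (I : Type) (H : I -> set X) (K : set X) :
  locally_finite_family H -> compact K -> finite_set [set i | H i `&` K !=set0].
Proof.

move=> lf cK.
have [f hf] := @choice X (set X) (fun x N => nbhs x N /\ finite_set [set i | H i `&` N !=set0]) lf.
have [[x0 Kx0]|K0] := pselect (K !=set0); last first.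
  apply: (@sub_finite_set _ _ set0); last exact: finite_set0.
  by move=> i [y [_ Ky]]; apply: K0; exists y.
have {}cK : cover_compact K.
  pose Y := HB.pack_for ptopologicalType X (isPointed.Build X x0).
  have e := @compact_cover Y.
  have : @compact Y K by exact: cK.
  by rewrite e.
have [D' _ KD'] := cK X setT (fun x => interior (f x))
   (fun x _ => @open_interior _ (f x))
   (fun x Kx => ex_intro2 _ _ x Logic.I (proj1 (hf x))).
have fin : finite_set (\bigcup_(x in [set` D']) [set i | H i `&` f x !=set0]).
  apply: bigcup_finite; first exact: finite_fset.
  by move=> z _; exact: (proj2 (hf z)).
apply: (sub_finite_set _ fin).
move=> i [y [Hiy Ky]].
have [z D'z fzy] := KD' y Ky.
exists z => //; exists y; split => //; exact: interior_subset.
Qed.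

Theorem proposition4p2 (R : realType) (X : topologicalType) (E : set X) :
  open_riemann_surface R X -> semi_admissible E -> condition_G E.
Proof.
move=> [[hX _ _] _] [cE [I [H [S [cH lf disj [cS iS] Eeq]]]]].
have cHc : forall i, closed (H i) by move=> i; exact: compact_closed.
have sub1 : interior E `<=` \bigcup_(i in [set: I]) H i.
  move=> w Ew; apply: contrapT => nUw.
  have oV : open (interior E `&` ~` \bigcup_(i in [set: I]) H i).
    apply: openI; first exact: open_interior.
    exact/closed_openC/lf_closed.
  have VS : (interior E `&` ~` \bigcup_(i in [set: I]) H i) `<=` S.
    move=> v [/interior_subset Ev nUv]; move: Ev; rewrite Eeq => -[//|Uv].
    by exfalso.
  have : interior S w.
    apply: (filterS VS); apply: open_nbhs_nbhs; split => //.
  by rewrite iS.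
move=> K cK.
pose J := [set i | H i `&` K !=set0].
exists (K `|` \bigcup_(i in J) H i); split.
- apply: compactU => //; apply: finite_compact_union => //.
  exact: lf_compact.
- exact: subsetUl.
move=> x Ex [[y [Cy Ky]] [z [Cz nQz]]].
have [i0 _ Hx] := sub1 x Ex.
pose B := \bigcup_(j in [set j | j <> i0]) H j.
have HB : H i0 `&` B = set0.
  apply/seteqP; split => // w [Hw [j nj Hjw]].
  have : (H i0 `&` H j) w by split.
  by rewrite disj //; apply/nesym.
have sep : separated (H i0) B.
  split.
    by move: (cHc i0) => /closure_id <-.
  by move: (@lf_closed _ _ _ [set j | j <> i0] lf cHc) => /closure_id <-.
have CAB : connected_component (interior E) x `<=` H i0 `|` B.
  move=> w /connected_component_sub /sub1 [j _ Hjw].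
  have [e|nj] := pselect (j = i0); first by left; rewrite -e.
  by right; exists j.
have [CA|CB] := connected_subset sep CAB (@component_connected _ _ _).
  apply: nQz; right; exists i0; last exact: CA.
  by exists y; split => //; exact: CA.
have : (H i0 `&` B) x by split => //; apply: CB; exact: connected_component_refl.
by rewrite HB.
Qed.
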